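(* Let $f$ be a piecewise contracting interval map satisfying the separation property, let $x\in\widetilde X$ and let $\theta$ be its itinerary. Then \[ \#\Delta^n_{lr}(x)\leqslant p(\theta,n+1)-p(\theta,n)\leqslant\#\Delta\qquad\forall\, n\geqslant 1. \] Moreover, if $n_0\geqslant 1$ is the smallest integer such that $\#(A\cap\Delta)\leqslant 1$ for every $A\in\mathcal{A}_n(x)$ and every $n\geqslant n_0$, then \[ p(\theta,n+1)=p(\theta,n)+\#\Delta^n_{lr}(x)\qquad\forall\, n\geqslant n_0. \]
   Context: Let $X$ be a compact interval of $\mathbb{R}$ and $X_1<\dots<X_N$ ($N\geqslant 2$) non-empty pairwise disjoint intervals, open in $X$, with $X=\bigcup_i\overline{X_i}$; $\Delta:=\{x\in\overline{X_i}\cap\overline{X_j}:i\neq j\}=\{c_1,\dots,c_{N-1}\}$ with $\{c_i\}=\overline{X_i}\cap\overline{X_{i+1}}$. A piecewise contracting interval map is $f:X\to X$, discontinuous at each point of $\Delta$, with $\lambda\in(0,1)$ such that $|f(x)-f(y)|\leqslant\lambda|x-y|$ for $x,y$ in the same $X_i$; $f_i$ is the continuous extension of $f|_{X_i}$ to $\overline{X_i}$. Separation property: each $f_i$ injective and $f_i(\overline{X_i})\cap f_j(\overline{X_j})=\emptyset$ for $i\neq j$. $\widetilde X:=\bigcap_{n\geqslant0}f^{-n}(X\setminus\Delta)$; the itinerary of $x\in\widetilde X$ is $\theta$ with $\theta_t=i$ iff $f^t(x)\in X_i$; $p(\theta,n):=\#\{\theta_t\dots\theta_{t+n-1}:t\geqslant0\}$.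 Atoms: $F_i(A):=\overline{f(A\cap X_i)}$, $A_{i_1\dots i_n}:=F_{i_n}\circ\dots\circ F_{i_1}(X)$ is an atom of generation $n$ if non-empty; $\mathcal{A}_n$ is the set of these and $\mathcal{A}_n(x):=\{A\in\mathcal{A}_n:\exists t\in\mathbb{N},\ f^{t+n}(x)\in A\}$. $c_i\in\Delta$ is $n$-left-right visited by the orbit of $x$ if there is $A\in\mathcal{A}_n(x)$ with $c_i\in A$, $f^{t+n}(x)\in A\cap X_i$ and $f^{t'+n}(x)\in A\cap X_{i+1}$ for some $t,t'\in\mathbb{N}$; $\Delta^n_{lr}(x)$ is the set of such discontinuities. *)

(* Defs.v *)
From HB Require Import structures.
From mathcomp Require Import all_boot all_order all_algebra.
From mathcomp Require Import all_classical all_reals topology normedtype.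
Set Implicit Arguments. Unset Strict Implicit. Unset Printing Implicit Defensive.
Import Order.TTheory GRing.Theory Num.Theory numFieldTopology.Exports numFieldNormedType.Exports.
Local Open Scope classical_set_scope.
Local Open Scope ring_scope.

Section PCIM.
Variables (R : realType) (N : nat) (c : nat -> R) (f : R -> R).

Definition Xset : set R := [set y | c 0 <= y <= c N].

(* Pieces, 0-based: piece 0 = [c 0, c 1), piece i = (c i, c (i+1)) for
   0 < i < N-1, piece (N-1) = (c (N-1), c N]. The discontinuity c (j+1)
   separates piece j and piece j+1. *)
Definition piece (i : nat) : set R :=
  [set y | (if i == 0%N then c 0 <= y else c i < y) /\
           (if i == N.-1 then y <= c N else y < c i.+1)].

Definition cpiece (i : nat) : set R := [set y | c i <= y <= c i.+1].

Definition Fop (i : nat) (A : set R) : set R := closure (f @` (A `&` piece i)).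

Definition atom (w : seq 'I_N) : set R := foldl (fun A (i : 'I_N) => Fop i A) Xset w.

Definition atoms (n : nat) : set (set R) :=
  [set A | (exists w : n.-tuple 'I_N, A = atom w) /\ A !=set0].

Definition atoms_x (n : nat) (x : R) : set (set R) :=
  [set A | atoms n A /\ exists t : nat, A (iter (t + n) f x)].

(* Delta^n_lr(x), as the set of indices j (standing for c (j+1)) *)
Definition Delta_lr (n : nat) (x : R) : {set 'I_N.-1} :=
  [set j : 'I_N.-1 | `[< exists A, atoms_x n x A /\ A (c j.+1) /\
      (exists t : nat, A (iter (t + n) f x) /\ piece j (iter (t + n) f x)) /\
      (exists t' : nat, A (iter (t' + n) f x) /\ piece j.+1 (iter (t' + n) f x)) >]].

Definition card_Delta_in (A : set R) : nat :=
  #|[set j : 'I_N.-1 | `[< A (c j.+1) >]]|.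

End PCIM.

Definition complexity (N : nat) (theta : nat -> 'I_N) (n : nat) : nat :=
  #|[set w : n.-tuple 'I_N | `[< exists t : nat, w = [tuple theta (t + k)%N | k < n] >]]|.

(* Main.v *)
Require Import Defs.
From HB Require Import structures.
From mathcomp Require Import all_boot all_order all_algebra.
From mathcomp Require Import all_classical all_reals topology normedtype.
From mathcomp Require Import zify.
Import Order.TTheory GRing.Theory Num.Theory numFieldTopology.Exports numFieldNormedType.Exports.
Local Open Scope classical_set_scope.
Local Open Scope ring_scope.
Import Num.Def.
Set Implicit Arguments. Unset Strict Implicit. Unset Printing Implicit Defensive.

Section Ana.
Variables (R : realType) (N : nat) (c : nat -> R) (f : R -> R) (fi : nat -> R -> R).

Definition conv (A : set R) := forall a b y, A a -> A b -> a <= y <= b -> A y.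

Lemma closure_conv A : conv A -> conv (closure A).
Proof.
move=> cA a b y Ca Cb /andP[ay yb].
have [<-|ay'] := eqVneq a y; first by [].
have [->|yb'] := eqVneq y b; first by [].
have lay : a < y by rewrite lt_neqAle ay' ay.
have lyb : y < b by rewrite lt_neqAle yb' yb.
have [p [Ap /= py]] : A `&` [set z | z < y] !=set0.
  apply: Ca; apply: open_nbhs_nbhs; split; [exact: open_lt|exact: lay].
have [q [Aq /= yq]] : A `&` [set z | y < z] !=set0.
  apply: Cb; apply: open_nbhs_nbhs; split; [exact: open_gt|exact: lyb].
apply: subset_closure; apply: (cA p q) => //.
by rewrite !ltW.
Qed.

Lemma Xset_closed : closed (Xset N c).
Proof.
have -> : Xset N c = `[c 0, c N]%classic.
  by rewrite eqEsubset; split => y; rewrite /Xset /= in_itv.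
exact: interval_closed.
Qed.

Lemma cpiece_compact i : compact (cpiece c i).
Proof.
have -> : cpiece c i = `[c i, c i.+1]%classic.
  by rewrite eqEsubset; split => y; rewrite /cpiece /= in_itv.
exact: segment_compact.
Qed.

Lemma image_conv i (S : set R) : conv S -> S `<=` cpiece c i ->
  {within cpiece c i, continuous fi i} -> conv (fi i @` S).
Proof.
move=> cS Sc fc _ _ v [y Sy <-] [z Sz <-] hv.
have key : forall a b, S a -> S b -> a <= b ->
  minr (fi i a) (fi i b) <= v <= maxr (fi i a) (fi i b) -> (fi i @` S) v.
  move=> a b Sa Sb ab hv'.
  have sub : `[a, b]%classic `<=` S.
    by move=> u /=; rewrite in_itv /= => hu; apply: (cS a b).
  have [w wab <-] := IVT ab (continuous_subspaceW (subset_trans sub Sc) fc) hv'.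
  by exists w => //; apply: sub.
have hv2 : minr (fi i y) (fi i z) <= v <= maxr (fi i y) (fi i z).
  case/andP: hv => h1 h2; apply/andP; split.
    by rewrite ge_min h1.
  by rewrite le_max h2 orbT.
have [yz|zy] := leP y z; first exact: (key y z).
apply: (key z y) => //; first exact: ltW.
by rewrite minC maxC.
Qed.
End Ana.
Section Ana2.
Variables (R : realType) (N : nat) (c : nat -> R) (f : R -> R) (fi : nat -> R -> R).
Hypothesis hc : forall i, (i < N)%N -> c i < c i.+1.
Hypothesis hfc : forall i, (i < N)%N -> {within cpiece c i, continuous fi i}.
Hypothesis hfe : forall (i : nat) y, (i < N)%N -> piece N c i y -> fi i y = f y.
Hypothesis hinj : forall (i : nat) y z, (i < N)%N -> cpiece c i y -> cpiece c i z ->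
     fi i y = fi i z -> y = z.
Hypothesis hdisj : forall i j, (i < N)%N -> (j < N)%N -> i <> j ->
     fi i @` cpiece c i `&` fi j @` cpiece c j = set0.

Lemma cmono m n : (m <= n)%N -> (n <= N)%N -> c m <= c n.
Proof.
elim: n => [|n IH]; first by rewrite leqn0 => /eqP ->.
rewrite leq_eqVlt => /orP[/eqP -> //|]; rewrite ltnS => mn nN.
apply: le_trans (IH mn (ltnW nN)) _; exact: ltW (hc nN).
Qed.

Lemma piece_conv i : conv (piece N c i).
Proof.
move=> a b y [a1 a2] [b1 b2] /andP[ay yb]; split.
  by case: ifP a1 => _ h; [exact: le_trans ay| exact: lt_le_trans ay].
by case: ifP b2 => _ h; [exact: le_trans h| exact: le_lt_trans h].
Qed.

Lemma piece_cpiece i : (i < N)%N -> piece N c i `<=` cpiece c i.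
Proof.
move=> iN y [h1 h2]; apply/andP; split.
  by move: h1; case: ifP => [/eqP -> //|_ /ltW].
move: h2; case: ifP => [/eqP ei|_ /ltW //].
by have -> : i.+1 = N by rewrite ei prednK // (leq_ltn_trans _ iN).
Qed.

Lemma Fop_sub i A : (i < N)%N -> closed A ->
  Fop N c f i A `<=` fi i @` (A `&` cpiece c i).
Proof.
move=> iN cA.
have cl : closed (fi i @` (A `&` cpiece c i)).
  apply: compact_closed; first exact: Rhausdorff.
  apply: continuous_compact.
    apply: continuous_subspaceW (hfc iN); exact: subIsetr.
  by rewrite setIC; apply: compact_closedI => //; exact: cpiece_compact.
rewrite /Fop [X in _ `<=` X]((closure_id _).1 cl); apply: closureS.
move=> _ [y [Ay py] <-]; exists y; first by split => //; exact: piece_cpiece.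
exact: hfe.
Qed.

Lemma Fop_conv i A : (i < N)%N -> conv A -> conv (Fop N c f i A).
Proof.
move=> iN cA; apply: closure_conv.
have -> : f @` (A `&` piece N c i) = fi i @` (A `&` piece N c i).
  rewrite eqEsubset; split => _ [y [Ay py] <-]; exists y => //; by rewrite hfe.
apply: image_conv (hfc iN).
  move=> a b y [Aa pa] [Ab pb] h; split; [exact: (cA a b)|exact: (piece_conv pa pb)].
by move=> y [_ /(piece_cpiece iN)].
Qed.

Lemma atom_rcons (w : seq 'I_N) i : atom c f (rcons w i) = Fop N c f i (atom c f w).
Proof. by rewrite /atom foldl_rcons. Qed.

Lemma atom_closed (w : seq 'I_N) : closed (atom c f w).
Proof.
elim/last_ind: w => [|w i _]; first exact: Xset_closed.
rewrite atom_rcons; exact: closed_closure.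
Qed.

Lemma atom_conv (w : seq 'I_N) : conv (atom c f w).
Proof.
elim/last_ind: w => [|w i IH].
  rewrite /atom /= /Xset => a b y /andP[a1 a2] /andP[b1 b2] /andP[ay yb].
  by apply/andP; split; [exact: le_trans a1 ay|exact: le_trans yb b2].
rewrite atom_rcons; exact: Fop_conv.
Qed.

Lemma atom_disj (w w' : seq 'I_N) y : size w = size w' ->
  atom c f w y -> atom c f w' y -> w = w'.
Proof.
elim/last_ind: w w' y => [|w i IH] w' y.
  by case: w' => // _ _ _.
case/lastP: w' => [|w' i']; first by rewrite size_rcons.
rewrite !size_rcons => /eqP; rewrite eqSS => /eqP sz.
rewrite !atom_rcons => /(Fop_sub (ltn_ord i) (atom_closed (w:=w))) [a [Aa ca] ea].
move=> /(Fop_sub (ltn_ord i') (atom_closed (w:=w'))) [b [Ab cb] eb].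
have ii' : i = i'.
  apply/val_inj/eqP; apply/negP => /negP /eqP ne.
  have H := hdisj (ltn_ord i) (ltn_ord i') ne.
  have : (fi i @` cpiece c i `&` fi i' @` cpiece c i') y by split; [exists a|exists b].
  by rewrite H.
subst i'.
have ab : a = b by apply: (hinj (ltn_ord i)) => //; rewrite ea eb.
subst b; by rewrite (IH w' a).
Qed.
End Ana2.
Section Comb.
Local Open Scope nat_scope.
Variable m : nat.

Lemma lift_max_val (j : 'I_m) : val (lift ord_max j) = val j.
Proof. by rewrite /= /bump leqNgt ltn_ord. Qed.

Lemma lift_0_val (j : 'I_m) : val (lift ord0 j) = (val j).+1.
Proof. by []. Qed.

Lemma comb_lb (E : {set 'I_m.+1}) (L : {set 'I_m}) :
  (forall j, j \in L -> (lift ord_max j \in E) && (lift ord0 j \in E)) ->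
  E != finset.set0 -> #|L| + 1 <= #|E|.
Proof.
move=> hL /set0Pn [e eE].
case: (@arg_minnP _ e (fun i => i \in E) (fun i => val i) eE) => e0 e0E emin.
have sub : e0 |: (lift ord0 @: L) \subset E.
  apply/fintype.subsetP => z; rewrite in_setU1 => /orP[/eqP -> //|/imsetP [j jL ->]].
  by case/andP: (hL j jL).
have nin : e0 \notin lift ord0 @: L.
  apply/imsetP => [[j jL ej]].
  case/andP: (hL j jL) => /emin h _.
  by move: h; rewrite lift_max_val ej lift_0_val ltnn.
have := subset_leq_card sub; rewrite cardsU1 nin card_imset; last exact: lift_inj.
by rewrite addnC.
Qed.

Lemma max_helper (E : {set 'I_m.+1}) :
  E != finset.set0 -> exists2 k0, k0 \in E & forall i, i \in E -> val i <= val k0.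
Proof.
move=> /set0Pn [e eE].
case: (@arg_maxnP _ e (fun i => i \in E) (fun i => val i) eE) => k0 k0E kmax.
by exists k0 => // i /kmax.
Qed.

Lemma comb_ub (E : {set 'I_m.+1}) (D : {set 'I_m}) :
  (forall i k, i \in E -> k \in E -> val i < val k ->
     forall j : 'I_m, val i <= val j < val k -> j \in D) ->
  #|E| <= #|D| + 1.
Proof.
move=> hD; have [->|ne] := eqVneq E finset.set0; first by rewrite cards0.
have [k0 k0E kmax] := max_helper ne.
have sub : E \subset k0 |: (lift ord_max @: D).
  apply/fintype.subsetP => i iE; rewrite in_setU1; have [//|ik] := eqVneq i k0.
  have ilt : val i < val k0.
    by rewrite ltn_neqAle (kmax i iE) andbT; apply: contra ik => /eqP/val_inj ->.
  have im : val i < m by move: ilt (ltn_ord k0) => /= ? ?; lia.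
  apply/imsetP; exists (Ordinal im).
    by apply: (hD i k0) => //=; rewrite leqnn.
  by apply: val_inj; rewrite lift_max_val.
have := subset_leq_card sub; rewrite cardsU1 card_imset; last exact: lift_inj.
move=> h; apply: leq_trans h _; rewrite addnC leq_add2l; by case: (_ \notin _).
Qed.

Lemma comb_eq (E : {set 'I_m.+1}) (D L : {set 'I_m}) :
  (forall i k, i \in E -> k \in E -> val i < val k ->
     forall j : 'I_m, val i <= val j < val k -> j \in D) ->
  #|D| <= 1 ->
  (forall j : 'I_m, lift ord_max j \in E -> lift ord0 j \in E -> j \in D -> j \in L) ->
  #|E| <= #|L| + 1.
Proof.
move=> hD D1 hL; have [->|ne] := eqVneq E finset.set0; first by rewrite cards0.
have [k0 k0E kmax] := max_helper ne.
have sub : E \subset k0 |: (lift ord_max @: L).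
  apply/fintype.subsetP => i iE; rewrite in_setU1; have [//|ik] := eqVneq i k0.
  have ilt : val i < val k0.
    by rewrite ltn_neqAle (kmax i iE) andbT; apply: contra ik => /eqP/val_inj ->.
  have im : val i < m by move: ilt (ltn_ord k0) => /= ? ?; lia.
  have jD : Ordinal im \in D by apply: (hD i k0) => //=; rewrite leqnn.
  have k0e : val k0 = (val i).+1.
    apply/eqP; rewrite eqn_leq ilt andbT; rewrite leqNgt; apply/negP => h.
    have im1 : (val i).+1 < m by move: h (ltn_ord k0) => /= ? ?; lia.
    have jD' : Ordinal im1 \in D by apply: (hD i k0) => //=; rewrite leqnSn.
    have : Ordinal im |: finset.set1 (Ordinal im1) \subset D by rewrite finset.subUset !finset.sub1set jD jD'.
    move/subset_leq_card; rewrite cards2.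
    have -> : (Ordinal im != Ordinal im1) = true.
      by apply/negP => /eqP/(congr1 val) /= /n_Sn.
    by move=> h2; have := leq_trans h2 D1.
  have ei : lift ord_max (Ordinal im) = i by apply: val_inj; rewrite lift_max_val.
  apply/imsetP; exists (Ordinal im) => //.
  apply: hL => //; first by rewrite ei.
  have -> : lift ord0 (Ordinal im) = k0 by apply: val_inj; rewrite lift_0_val k0e.
  done.
have := subset_leq_card sub; rewrite cardsU1 card_imset; last exact: lift_inj.
move=> h; apply: leq_trans h _; rewrite addnC leq_add2l; by case: (_ \notin _).
Qed.
End Comb.
Section Main.
Variables (R : realType) (N' : nat) (c : nat -> R) (f : R -> R) (fi : nat -> R -> R)
  (x : R) (theta : nat -> 'I_N'.+1).
Hypothesis hc : forall i, (i < N'.+1)%N -> c i < c i.+1.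
Hypothesis hfc : forall i, (i < N'.+1)%N -> {within cpiece c i, continuous fi i}.
Hypothesis hfe : forall (i : nat) y, (i < N'.+1)%N -> piece N'.+1 c i y -> fi i y = f y.
Hypothesis hinj : forall (i : nat) y z, (i < N'.+1)%N -> cpiece c i y -> cpiece c i z ->
     fi i y = fi i z -> y = z.
Hypothesis hdisj : forall i j, (i < N'.+1)%N -> (j < N'.+1)%N -> i <> j ->
     fi i @` cpiece c i `&` fi j @` cpiece c j = set0.
Hypothesis hX : forall t, Xset N'.+1 c (iter t f x).
Hypothesis htheta : forall t, piece N'.+1 c (theta t) (iter t f x).

Local Notation wt t n := [tuple theta (t + k)%N | k < n].

Lemma wt_val t n : val (wt t n) = map (fun k => theta (t + k)%N) (iota 0 n).
Proof. by rewrite /= -val_enum_ord -map_comp. Qed.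

Lemma wt_rcons t n : val (wt t n.+1) = rcons (val (wt t n)) (theta (t+n)%N).
Proof.
rewrite !wt_val; have -> : iota 0 n.+1 = iota 0 (n + 1) by rewrite addn1.
by rewrite iotaD map_cat cats1 add0n.
Qed.

Lemma orbit_atom t n : atom c f (wt t n) (iter (t+n) f x).
Proof.
elim: n => [|n IH]; first by rewrite addn0 /atom wt_val /=; exact: hX.
rewrite wt_rcons atom_rcons addnS iterS; apply: subset_closure.
by exists (iter (t + n) f x) => //; split.
Qed.

Lemma piece_lt i y : piece N'.+1 c i y -> (i < N')%N -> y < c i.+1.
Proof. by case=> _; case: ifP => [/eqP -> /=|//]; rewrite ltnn. Qed.

Lemma piece_gt i y : piece N'.+1 c i y -> (0 < i)%N -> c i < y.
Proof. by case; case: ifP => [/eqP ->|//]; rewrite ltnn. Qed.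

Lemma piece_uniq i k y : (i < N'.+1)%N -> (k < N'.+1)%N ->
  piece N'.+1 c i y -> piece N'.+1 c k y -> i = k.
Proof.
have key : forall i k, (i < k)%N -> (k < N'.+1)%N ->
    piece N'.+1 c i y -> piece N'.+1 c k y -> False.
  move=> a b ab bN pa pb.
  have h1 := piece_lt pa (leq_trans ab bN).
  have h2 := piece_gt pb (leq_ltn_trans (leq0n a) ab).
  have h3 : c a.+1 <= c b by apply: (cmono hc) => //; exact: ltnW.
  by have := lt_trans (le_lt_trans h3 h2) h1; rewrite ltxx.
move=> iN kN pi pk; case: (ltngtP i k) => // h.
  by case: (key _ _ h kN pi pk).
by case: (key _ _ h iN pk pi).
Qed.

Lemma theta_piece t (j : nat) : (j < N'.+1)%N -> piece N'.+1 c j (iter t f x) -> val (theta t) = j.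
Proof. by move=> jN pj; apply: (piece_uniq (ltn_ord _) jN (htheta t) pj). Qed.

Lemma atom_eq n (w w' : n.-tuple 'I_N'.+1) y : atom c f w y -> atom c f w' y -> w = w'.
Proof.
move=> a a'; apply: val_inj; apply: (atom_disj hfc hfe hinj hdisj) a a'.
by rewrite !size_tuple.
Qed.

Unset Implicit Arguments.
Definition Wset n := [set w : n.-tuple 'I_N'.+1 | `[< exists t : nat, w = wt t n >]]%SET.
Definition Pset n := [set p : n.-tuple 'I_N'.+1 * 'I_N'.+1 |
  `[< exists t : nat, p.1 = wt t n /\ p.2 = theta (t + n)%N >]]%SET.
Definition Eset n (w : n.-tuple 'I_N'.+1) := [set i | (w, i) \in Pset n]%SET.
Definition Dset n (w : n.-tuple 'I_N'.+1) := [set j : 'I_N' | `[< atom c f w (c j.+1) >]]%SET.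
Definition Lset n (w : n.-tuple 'I_N'.+1) := [set j : 'I_N' | `[< atom c f w (c j.+1) >] &&
   (lift ord_max j \in Eset n w) && (lift ord0 j \in Eset n w)]%SET.
Set Implicit Arguments.

Lemma inE_E n w i : (i \in Eset n w) = `[< exists t : nat, w = wt t n /\ i = theta (t + n)%N >].
Proof. by rewrite !inE. Qed.

Lemma C1 n : #|Wset n.+1| = #|Pset n|.
Proof.
pose h (p : n.-tuple 'I_N'.+1 * 'I_N'.+1) := rcons_tuple p.1 p.2.
have hinj' : injective h.
  move=> [a i] [b k] /(congr1 val) /= /rcons_inj [/val_inj -> ->]; done.
suff -> : Wset n.+1 = h @: Pset n by rewrite card_imset.
apply/setP => u; rewrite inE; apply/asboolP/imsetP.
  move=> [t ->]; exists (wt t n, theta (t + n)%N).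
    by rewrite inE; apply/asboolP; exists t.
  by apply: val_inj; rewrite wt_rcons.
move=> [[a i]]; rewrite inE => /asboolP [t /= [-> ->]] ->.
by exists t; apply: val_inj; rewrite wt_rcons.
Qed.

Lemma card_pairs (A B : finType) (Q : {set A * B}) :
  #|Q| = (\sum_(a : A) #|[set b | (a, b) \in Q]%SET|)%N.
Proof.
rewrite -sum1_card big_mkcond /=.
under [RHS]eq_bigr => a _ do rewrite -sum1_card big_mkcond /=.
rewrite pair_big /=; apply: eq_bigr => [[a b]] _ /=; by rewrite inE.
Qed.

Lemma C2 n : #|Pset n| = (\sum_(w in Wset n) #|Eset n w|)%N.
Proof.
rewrite card_pairs [RHS]big_mkcond /=; apply: eq_bigr => w _.
case: ifP => // wW; apply/eqP; rewrite cards_eq0; apply/eqP/setP => i.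
rewrite !inE; apply/negbTE/negP => /asboolP [t [/= wt' _]].
by move: wW; rewrite inE => /negP; apply; apply/asboolP; exists t.
Qed.

Lemma C3 n w : w \in Wset n -> Eset n w != finset.set0.
Proof.
rewrite inE => /asboolP [t ->]; apply/set0Pn; exists (theta (t + n)%N).
by rewrite inE_E; apply/asboolP; exists t.
Qed.

Lemma E_orbit n w i : i \in Eset n w ->
  exists t, atom c f w (iter (t + n) f x) /\ piece N'.+1 c i (iter (t + n) f x).
Proof.
rewrite inE_E => /asboolP [t [-> ->]]; exists t; split; [exact: orbit_atom|exact: htheta].
Qed.

Lemma D_hyp n w : forall i k, i \in Eset n w -> k \in Eset n w -> (val i < val k)%N ->
     forall j : 'I_N', (val i <= val j < val k)%N -> j \in Dset n w.
Proof.
move=> i k iE kE ik j /andP[ij jk].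
have ko := ltn_ord k; have jo := ltn_ord j; move: ik ij jk ko jo => /= ik ij jk ko jo.
have [t [at1 p1]] := E_orbit iE.
have [t' [at2 p2]] := E_orbit kE.
rewrite inE; apply/asboolP.
have hcv := atom_conv hfc hfe (w:=w); apply: (hcv _ _ _ at1 at2); apply/andP; split.
  apply: le_trans (ltW (piece_lt p1 _)) _.
    lia.
  by apply: (cmono hc); lia.
apply: ltW; apply: le_lt_trans (piece_gt p2 _).
  by apply: (cmono hc); lia.
lia.
Qed.

Lemma C7 n w : (#|Eset n w| <= #|Dset n w| + 1)%N.
Proof. exact: comb_ub (@D_hyp n w). Qed.

Lemma C6 n w : w \in Wset n -> (#|Lset n w| + 1 <= #|Eset n w|)%N.
Proof.
move=> wW; apply: comb_lb; last exact: C3.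
by move=> j; rewrite inE => /andP[/andP[_ ->] ->].
Qed.

Lemma C8 n w : (#|Dset n w| <= 1)%N -> (#|Eset n w| <= #|Lset n w| + 1)%N.
Proof.
move=> D1; apply: comb_eq (@D_hyp n w) D1 _.
move=> j h1 h2 h3; rewrite [_ \in Lset _ _]inE h1 h2 !andbT; by move: h3; rewrite inE.
Qed.

Lemma sum_ind (T : finType) (S : {set T}) :
  #|S| = (\sum_j (if j \in S then 1 else 0))%N.
Proof. by rewrite -sum1_card big_mkcond. Qed.

Lemma sum_le1 (T : finType) (Ws : {set T}) (Q : pred T) :
  {in Ws &, forall w w', Q w -> Q w' -> w = w'} ->
  (\sum_(w in Ws) (if Q w then 1 else 0) <= 1)%N.
Proof.
move=> h; rewrite -big_mkcondr /=.
rewrite (eq_bigl (mem [set i in Ws | Q i]%SET)) => [|i]; last by rewrite !inE.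
rewrite sum1_card; apply/card_le1_eqP => a b; rewrite !inE => /andP[aW aQ] /andP[bW bQ].
exact: h.
Qed.

Lemma atoms_x_W n w : w \in Wset n -> atoms_x N'.+1 c f n x (atom c f w).
Proof.
rewrite inE => /asboolP [t ->]; split; last by exists t; exact: orbit_atom.
split; first by exists (wt t n).
by exists (iter (t + n) f x); exact: orbit_atom.
Qed.

Lemma Dl2 n w j : w \in Wset n -> j \in Lset n w -> j \in Delta_lr N'.+1 c f n x.
Proof.
move=> wW; rewrite inE => /andP[/andP[/asboolP hA]].
rewrite !inE_E => /asboolP [t [ew et]] /asboolP [t' [ew' et']].
rewrite inE; apply/asboolP; exists (atom c f w); split; first exact: atoms_x_W.
split; first exact: hA.
split.
  exists t; split; first by rewrite ew; exact: orbit_atom.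
  by have := htheta (t + n); rewrite -et lift_max_val.
exists t'; split; first by rewrite ew'; exact: orbit_atom.
by have := htheta (t' + n); rewrite -et' lift_0_val.
Qed.

Lemma Dl1 n j : j \in Delta_lr N'.+1 c f n x -> exists2 w, w \in Wset n & j \in Lset n w.
Proof.
rewrite inE => /asboolP [A [[[[w' ->] _] _] [hA [[t [a1 p1]] [t' [a2 p2]]]]]].
have e1 : w' = wt t n := atom_eq a1 (orbit_atom t n).
have e2 : w' = wt t' n := atom_eq a2 (orbit_atom t' n).
have th1 : val (theta (t + n)%N) = j := theta_piece (leqW (ltn_ord j)) p1.
have jN : (j.+1 < N'.+1)%N by rewrite ltnS; exact: (ltn_ord j).
have th2 : val (theta (t' + n)%N) = j.+1 := theta_piece jN p2.
exists w'; first by rewrite inE; apply/asboolP; exists t.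
rewrite inE; apply/andP; split; first (apply/andP; split).
- by apply/asboolP.
- rewrite inE_E; apply/asboolP; exists t; split => //.
  by apply: val_inj; rewrite lift_max_val th1.
- rewrite inE_E; apply/asboolP; exists t'; split => //.
  by apply: val_inj; rewrite lift_0_val th2.
Qed.

Lemma L_uniq n w w' j : j \in Lset n w -> j \in Lset n w' -> w = w'.
Proof.
rewrite !inE => /andP[/andP[/asboolP h1 _] _] /andP[/andP[/asboolP h2 _] _].
exact: atom_eq h1 h2.
Qed.

Lemma C4 n : #|Delta_lr N'.+1 c f n x| = (\sum_(w in Wset n) #|Lset n w|)%N.
Proof.
rewrite sum_ind.
under [RHS]eq_bigr => w _ do rewrite sum_ind.
rewrite [RHS]exchange_big /=; apply: eq_bigr => j _.
case: ifP => hj.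
  have [w0 w0W jL] := Dl1 hj.
  rewrite (bigD1 w0) //= jL big1 ?addn0 // => w /andP[wW ne].
  case: ifP => // jL'; by rewrite (L_uniq jL' jL) eqxx in ne.
rewrite big1 // => w wW; case: ifP => // jL.
by rewrite (Dl2 wW jL) in hj.
Qed.

Lemma C5 n : (\sum_(w in Wset n) #|Dset n w| <= N')%N.
Proof.
under eq_bigr => w _ do rewrite sum_ind.
rewrite exchange_big /=.
apply: (@leq_trans (\sum_(j : 'I_N') 1)); last by rewrite sum1_card card_ord.
apply: leq_sum => j _; apply: (sum_le1 (Q := fun w => j \in Dset n w)).
move=> w w' _ _; rewrite !inE => h1 h2; exact: atom_eq h1 h2.
Qed.

Lemma part1 n : (#|Delta_lr N'.+1 c f n x| + #|Wset n| <= #|Wset n.+1|)%N /\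
   (#|Wset n.+1| <= #|Wset n| + N')%N.
Proof.
rewrite C1 C2 C4 -[#|Wset n|]sum1_card; split.
  rewrite -big_split /=; apply: leq_sum => w wW; exact: C6.
apply: (@leq_trans (\sum_(w in Wset n) (#|Dset n w| + 1))%N).
  by apply: leq_sum => w _; exact: C7.
rewrite big_split /= addnC leq_add2l; exact: C5.
Qed.

Lemma part2 n : (forall A, atoms_x N'.+1 c f n x A -> (card_Delta_in N'.+1 c A <= 1)%N) ->
  #|Wset n.+1| = (#|Wset n| + #|Delta_lr N'.+1 c f n x|)%N.
Proof.
move=> hA; apply/eqP; rewrite eqn_leq addnC (part1 n).1 andbT.
rewrite C1 C2 C4 -[#|Wset n|]sum1_card -big_split /=.
apply: leq_sum => w wW.
have hD : (#|Dset n w| <= 1)%N.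
  apply: leq_trans _ (hA _ (atoms_x_W wW)).
  apply/eq_leq/eq_card => j; rewrite inE.
  apply/idP/idP => [h|/set_mem //]; exact: mem_set.
by move: (C8 hD); rewrite addnC.
Qed.

Lemma compl_eq n : complexity theta n = #|Wset n|.
Proof.
rewrite /complexity; apply: eq_card => w; rewrite [RHS]inE.
apply/idP/idP => [/set_mem //|h]; exact: mem_set.
Qed.
End Main.

Unset Implicit Arguments. Set Strict Implicit.

Theorem lemma5 (R : realType) (N : nat) (c : nat -> R) (f : R -> R)
    (fi : nat -> R -> R) (lambda : R) (x : R) (theta : nat -> 'I_N) :
  (2 <= N)%N ->
  (* partition points c 0 < c 1 < ... < c N *)
  (forall i, (i < N)%N -> c i < c i.+1) ->
  (* f : X -> X *)
  (forall y, Xset N c y -> Xset N c (f y)) ->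
  (* f is discontinuous at each point of Delta *)
  (forall j, (0 < j < N)%N -> ~ {for c j, continuous f}) ->
  (* piecewise contraction *)
  0 < lambda < 1 ->
  (forall (i : nat) y z, (i < N)%N -> piece N c i y -> piece N c i z ->
     `|f y - f z| <= lambda * `|y - z|) ->
  (* fi i is the continuous extension of f restricted to X_i to its closure *)
  (forall i, (i < N)%N -> {within cpiece c i, continuous fi i}) ->
  (forall (i : nat) y, (i < N)%N -> piece N c i y -> fi i y = f y) ->
  (* separation property *)
  (forall (i : nat) y z, (i < N)%N -> cpiece c i y -> cpiece c i z ->
     fi i y = fi i z -> y = z) ->
  (forall i j, (i < N)%N -> (j < N)%N -> i <> j ->
     fi i @` cpiece c i `&` fi j @` cpiece c j = set0) ->
  (* x in X~ and theta its itinerary *)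
  (forall t, Xset N c (iter t f x) /\ forall j, (0 < j < N)%N -> iter t f x <> c j) ->
  (forall t, piece N c (theta t) (iter t f x)) ->
  (forall n, (1 <= n)%N ->
     (#|Delta_lr N c f n x| + complexity theta n <= complexity theta n.+1)%N /\
     (complexity theta n.+1 <= complexity theta n + N.-1)%N) /\
  (forall n0 : nat, (1 <= n0)%N ->
     (forall n, (n0 <= n)%N -> forall A, atoms_x N c f n x A -> (card_Delta_in N c A <= 1)%N) ->
     (forall m : nat, (1 <= m)%N ->
        (forall n, (m <= n)%N -> forall A, atoms_x N c f n x A -> (card_Delta_in N c A <= 1)%N) ->
        (n0 <= m)%N) ->
     forall n, (n0 <= n)%N ->
       complexity theta n.+1 = (complexity theta n + #|Delta_lr N c f n x|)%N).
Proof.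
move=> N2 hc _ _ _ _ hfc hfe hinj hdisj hX htheta.
destruct N as [|N']; first by [].
have hX' : forall t, Xset N'.+1 c (iter t f x) by move=> t; case: (hX t).
split.
  move=> n _; rewrite !(compl_eq theta n) !(compl_eq theta n.+1).
  exact: (part1 hc hfc hfe hinj hdisj hX' htheta n).
move=> n0 _ H _ n n0n.
rewrite !(compl_eq theta n) !(compl_eq theta n.+1).
exact: (part2 hc hfc hfe hinj hdisj hX' htheta (H n n0n)).
Qed.
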